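(* Let $(\Gamma,\tau)$ be a $z$-oriented triangulation of a connected closed $2$-dimensional surface, and let $\Gamma_{\tau}$ be its transition digraph and $\mathcal{X}_{\tau}$ its Markov chain. Then: (1) for every vertex $v$ of $\Gamma_{\tau}$ there exists a closed directed walk of length $3$ in $\Gamma_{\tau}$ passing through $v$; (2) $\mathcal{X}_{\tau}$ is irreducible.
   Context: A triangulation $\Gamma$ of a connected closed surface $M$ (not necessarily orientable) is a closed $2$-cell embedding of a connected finite simple graph in $M$ all of whose faces are triangles. Two edges are adjacent if they are distinct and lie in a common face; two faces are adjacent if distinct and their intersection is an edge. A zigzag is a sequence of edges $(e_i)_{i\in\mathbb{N}}$ such that for every $i$: $e_i,e_{i+1}$ are adjacent, the faces containing $e_i,e_{i+1}$ and $e_{i+1},e_{i+2}$ are adjacent, and $e_i,e_{i+2}$ are disjoint; it is a cyclic sequence, equivalently a cyclic vertex sequence $v_1,\dots,v_n$ with $e_i=v_iv_{i+1}$, traversing $e_i$ from $v_i$ to $v_{i+1}$. $Z^{-1}$ denotes the reversed zigzag. A $z$-orientation $\tau$ is a set of zigzags containing exactly one of $Z,Z^{-1}$ for every zigzag $Z$. Every edge is traversed exactly twice in total by zigzags of $\tau$; it is of type I if the two traversals are in opposite directions, of type II if in the same direction (then it is regarded as directed that way). Each face either has two type I edges and one type II edge (type I face) or three type II edges forming a directed cycle (type II face). Transition digraph and chain: on vertex set $V=\{v_1,\dots,v_n\}$, let $d(v)$ be the number of type I edges at $v$ plus twice the number of type II edges directed out of $v$. Set $p_{ij}=1/d(v_i)$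 if $v_iv_j$ is an edge of type I, $p_{ij}=2/d(v_i)$ if $v_iv_j$ is a type II edge directed from $v_i$ to $v_j$, and $p_{ij}=0$ otherwise. $\Gamma_{\tau}$ is the digraph on $V$ with a directed edge $v_i\to v_j$ exactly when $p_{ij}>0$ (so each type I edge gives two opposite directed edges and each type II edge one directed edge), and $\mathcal{X}_{\tau}$ is the time-homogeneous Markov chain on $V$ with transition matrix $[p_{ij}]$. The length of a walk is the number of edges traversed, with multiplicity. *)

(* Defs.v *)
From mathcomp Require Import all_boot all_order all_algebra.
Set Implicit Arguments. Unset Strict Implicit. Unset Printing Implicit Defensive.
Import Order.TTheory GRing.Theory Num.Theory.

Section Triangulation.
Variable V : finType.
Variable faces : {set {set V}}.

Definition adj (u v : V) : bool :=
  (u != v) && [exists f in faces, (u \in f) && (v \in f)].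

Definition link (v : V) (x y : V) : bool := [set v; x; y] \in faces.

Definition triangulation : Prop :=
  [/\ (forall f, f \in faces -> #|f| = 3),
      (forall u v, adj u v ->
         #|[set f in faces | (u \in f) && (v \in f)]| = 2),
      (forall v, exists2 f, f \in faces & v \in f),
      faces != set0 &
      (forall u v, connect adj u v)] /\
      (* the link of every vertex is connected (so it is a single cycle,
         i.e. every vertex has a disk neighbourhood) *)
      (forall v x y, adj v x -> adj v y -> connect (link v) x y).

(* A zigzag
   with cyclic vertex sequence v_1,...,v_n is encoded by the cyclic sequence of
   its consecutive triples (v_i, v_(i+1), v_(i+2)); the i-th triple records
   the traversal of e_i = v_i v_(i+1) from v_i to v_(i+1). *)
Definition flag := (V * V * V)%type.
Definition is_flag (t : flag) : bool := [set t.1.1; t.1.2; t.2] \in faces.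

Definition other_vertex (a b c : V) : V :=
  odflt a [pick d | ([set b; c; d] \in faces) && (d != a)].

(* The zigzag conditions (consecutive edges adjacent, consecutive faces
   adjacent, e_i and e_(i+2) disjoint) force v_(i+3) to be this vertex. *)
Definition zsucc (t : flag) : flag :=
  (t.1.2, t.2, other_vertex t.1.1 t.1.2 t.2).

Definition zigzag (Z : {set flag}) : Prop :=
  exists2 t, is_flag t & Z = [set x | fconnect zsucc t x].

Definition zrev (Z : {set flag}) : {set flag} :=
  [set (t.2, t.1.2, t.1.1) | t in Z].

Definition z_orientation (tau : {set {set flag}}) : Prop :=
  (forall Z, Z \in tau -> zigzag Z) /\
  (forall Z, zigzag Z ->
     (Z \in tau \/ zrev Z \in tau) /\
     (Z \in tau -> zrev Z \in tau -> Z = zrev Z)).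

Variable tau : {set {set flag}}.

Definition trav (a b : V) : nat :=
  \sum_(Z in tau) #|[set t in Z | (t.1.1 == a) && (t.1.2 == b)]|.

Definition typeI (a b : V) : bool := [&& adj a b, 0 < trav a b & 0 < trav b a].
Definition typeII (a b : V) : bool := [&& adj a b, 0 < trav a b & trav b a == 0].

Definition zdeg (v : V) : nat :=
  #|[set u | typeI v u]| + 2 * #|[set u | typeII v u]|.

Definition tarc (a b : V) : bool := typeI a b || typeII a b.

Local Open Scope ring_scope.
Variable R : realFieldType.

Definition ptrans (i j : V) : R :=
  if typeI i j then (zdeg i)%:R^-1
  else if typeII i j then 2 / (zdeg i)%:R
  else 0.

Fixpoint pstep (n : nat) (i j : V) : R :=
  match n with
  | 0 => (i == j)%:R
  | n.+1 => \sum_(k : V) ptrans i k * pstep n k j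
  end.

Definition chain_irreducible : Prop :=
  forall i j : V, exists n : nat, 0 < pstep n i j.

End Triangulation.

(* Main.v *)
Require Import Defs.
From mathcomp Require Import all_boot all_order all_algebra.
From mathcomp Require Import lra.
Set Implicit Arguments. Unset Strict Implicit. Unset Printing Implicit Defensive.
Import Order.TTheory GRing.Theory Num.Theory.

Definition inS (V : finType) (tau : {set {set flag V}}) (t : flag V) : Prop :=
  exists2 Z, Z \in tau & t \in Z.

Lemma card3 (V : finType) (a b c : V) :
  #|[set a; b; c]| = 3 -> [/\ a != b, a != c & b != c].
Proof.
rewrite -setUA cardsU1 cards2 !inE negb_or.
by case: (a == b); case: (a == c); case: (b == c).
Qed.

Lemma card3' (V : finType) (a b c : V) :
  [/\ a != b, a != c & b != c] -> #|[set a; b; c]| = 3.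
Proof.
case=> ab ac bc; rewrite -setUA cardsU1 cards2 !inE negb_or ab ac bc.
by [].
Qed.

Lemma inS_succ (V : finType) (faces : {set {set V}}) tau t :
  z_orientation faces tau -> inS tau t -> inS tau (zsucc faces t).
Proof.
case=> Hz _ [Z HZ Ht]; exists Z => //.
case: (Hz Z HZ) => t0 _ EZ; move: Ht; rewrite EZ !inE => Ht.
by apply: connect_trans Ht (connect1 _); rewrite /= eqxx.
Qed.

Lemma inS_trav (V : finType) (tau : {set {set flag V}}) x y z :
  inS tau (x, y, z) -> 0 < trav tau x y.
Proof.
case=> Z HZ Ht; rewrite /trav (bigD1 Z) //=.
apply: ltn_addr; apply/card_gt0P; exists (x, y, z); by rewrite inE Ht /= !eqxx.
Qed.

Lemma inS_or_rev (V : finType) (faces : {set {set V}}) tau (a b c : V) :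
  z_orientation faces tau -> [set a; b; c] \in faces ->
  inS tau (a, b, c) \/ inS tau (c, b, a).
Proof.
case=> _ Ho Hf.
set Z := [set x | fconnect (zsucc faces) (c, b, a) x].
have zZ : zigzag faces Z.
  exists (c, b, a) => //; rewrite /is_flag /=.
  have -> : [set c; b; a] = [set a; b; c].
    by apply/setP => x; rewrite !inE; by case: (x == a); case: (x == b); case: (x == c).
  by [].
case: (Ho Z zZ) => [[HZ|HZ] _].
  by right; exists Z => //; rewrite inE connect0.
left; exists (zrev Z) => //.
by apply/imsetP; exists (c, b, a) => //; rewrite inE connect0.
Qed.

Lemma adj_face (V : finType) (faces : {set {set V}}) (a b c : V) :
  (forall f, f \in faces -> #|f| = 3) -> [set a; b; c] \in faces ->
  [/\ adj faces a b, adj faces b c & adj faces a c].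
Proof.
move=> Hc Hf; have [ab ac bc] := card3 (Hc _ Hf).
by split; rewrite /adj ?ab ?ac ?bc /=; apply/existsP; exists [set a; b; c];
  rewrite Hf !inE !eqxx ?orbT.
Qed.

Lemma adjC (V : finType) (faces : {set {set V}}) (a b : V) :
  adj faces a b -> adj faces b a.
Proof.
rewrite /adj => /andP[ab /existsP[f /andP[Hf /andP[Ha Hb]]]].
rewrite eq_sym ab /=; apply/existsP; exists f; by rewrite Hf Ha Hb.
Qed.

Lemma tarcI (V : finType) (faces : {set {set V}}) tau (a b : V) :
  adj faces a b -> 0 < trav tau a b -> tarc faces tau a b.
Proof.
move=> Hab Ht; rewrite /tarc /typeI /typeII Hab Ht /=.
by case: (trav tau b a).
Qed.

Lemma face_cycle (V : finType) (faces : {set {set V}}) tau (a b c : V) :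
  (forall f, f \in faces -> #|f| = 3) -> z_orientation faces tau ->
  [set a; b; c] \in faces ->
  (tarc faces tau a b /\ tarc faces tau b c /\ tarc faces tau c a) \/
  (tarc faces tau a c /\ tarc faces tau c b /\ tarc faces tau b a).
Proof.
move=> Hc Ho Hf.
have E1 : [set b; c; a] = [set a; b; c].
  by apply/setP => x; rewrite !inE; by case: (x == a); case: (x == b); case: (x == c).
have E2 : [set c; a; b] = [set a; b; c].
  by apply/setP => x; rewrite !inE; by case: (x == a); case: (x == b); case: (x == c).
have [Aab Abc Aac] := adj_face Hc Hf.
have Aba := adjC Aab; have Acb := adjC Abc; have Aca := adjC Aac.
have P : forall x y z, inS tau (x, y, z) ->
    0 < trav tau x y /\ 0 < trav tau y z.
  move=> x y z H; split; first exact: inS_trav H.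
  have := inS_succ Ho H; rewrite /zsucc /=; exact: inS_trav.
have T := @tarcI V faces tau.
have Hf1 : [set b; c; a] \in faces by rewrite E1.
have Hf2 : [set c; a; b] \in faces by rewrite E2.
have [H1|H1] := inS_or_rev Ho Hf;
have [H2|H2] := inS_or_rev Ho Hf1;
have [H3|H3] := inS_or_rev Ho Hf2;
move: (P _ _ _ H1) (P _ _ _ H2) (P _ _ _ H3) => [p1 q1] [p2 q2] [p3 q3];
first [ left; split; [|split]; apply: T; assumption | right; split; [|split]; apply: T; assumption ].
Qed.

Lemma face_split (V : finType) (f : {set V}) (x y : V) :
  #|f| = 3 -> x \in f -> y \in f -> x != y -> exists z, f = [set x; y; z].
Proof.
move=> Hc Hx Hy xy.
case: (pickP [pred z | (z \in f) && (z != x) && (z != y)]) => [z /= /andP[/andP[Hz zx] zy]|H0].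
  exists z; apply/eqP; rewrite eq_sym eqEcard Hc card3' ?leqnn ?andbT.
    by apply/subsetP => w; rewrite !inE => /orP[/orP[]|] /eqP->.
  by split; rewrite // eq_sym.
have : f \subset [set x; y].
  apply/subsetP => w Hw; move: (H0 w) => /=; rewrite Hw !inE /=.
  by case: (w == x) => //=; case: (w == y).
by move/subset_leq_card; rewrite Hc cards2 xy.
Qed.

Lemma pstep_ge0 (V : finType) faces tau (R : realFieldType) n (i j : V) :
  (0 <= pstep faces tau R n i j)%R.
Proof.
elim: n i => [|n IH] i /=; first by case: (i == j); rewrite ?ler01 ?lexx.
apply: sumr_ge0 => k _; apply: mulr_ge0 => //.
rewrite /ptrans; case: ifP => _; first by rewrite invr_ge0 ler0n.
case: ifP => _ //; apply: divr_ge0 => //; exact: ler0n.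
Qed.

Lemma ptrans_gt0 (V : finType) faces tau (R : realFieldType) (i k : V) :
  tarc faces tau i k -> (0 < ptrans faces tau R i k)%R.
Proof.
rewrite /tarc /ptrans => H.
have Hd : (0 < zdeg faces tau i)%N.
  rewrite /zdeg; case/orP: H => H.
    by apply: ltn_addr; apply/card_gt0P; exists k; rewrite inE.
  apply: ltn_addl; rewrite muln_gt0 /=; apply/card_gt0P; exists k; rewrite inE.
  exact: H.
case: ifP => HI; first by rewrite invr_gt0 ltr0n.
case/orP: H => [H|->]; first by rewrite H in HI.
apply: divr_gt0 => //; by rewrite ltr0n.
Qed.

Lemma pstep_path (V : finType) faces tau (R : realFieldType) (p : seq V) (i : V) :
  path (tarc faces tau) i p -> (0 < pstep faces tau R (size p) i (last i p))%R.
Proof.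
elim: p i => [|k p IH] i /=; first by rewrite eqxx ltr01.
case/andP=> Hik Hp.
rewrite (bigD1 k) //=.
have h1 := ptrans_gt0 R Hik.
have h2 := IH _ Hp.
have h3 : (0 <= \sum_(k0 | k0 != k) ptrans faces tau R i k0 *
                 pstep faces tau R (size p) k0 (last k p))%R.
  apply: sumr_ge0 => k0 _; apply: mulr_ge0; last exact: pstep_ge0.
  rewrite /ptrans; case: ifP => _; first by rewrite invr_ge0 ler0n.
  case: ifP => _ //; apply: divr_ge0 => //; exact: ler0n.
have h4 := mulr_gt0 h1 h2.
lra.
Qed.

Theorem proposition1 (V : finType) (faces : {set {set V}})
    (tau : {set {set flag V}}) (R : realFieldType) :
  triangulation faces ->
  z_orientation faces tau ->
  (forall v : V, exists u w : V,
      [/\ tarc faces tau v u, tarc faces tau u w & tarc faces tau w v]) /\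
  chain_irreducible faces tau R.
Proof.
move=> [[Hc _ Hv _ Hconn] _] Ho.
split.
  move=> v; have [f Hf Hvf] := Hv v.
  have [u [Hu uv]] : exists u, u \in f /\ u != v.
    case: (pickP [pred u | (u \in f) && (u != v)]) => [u /= /andP[Hu uv]|H0].
      by exists u.
    have : f \subset [set v].
      apply/subsetP => w Hw; move: (H0 w) => /=; rewrite Hw !inE /=.
      by case: (w == v).
    by move/subset_leq_card; rewrite (Hc _ Hf) cards1.
  have vu : v != u by rewrite eq_sym.
  have [z Ez] := face_split (Hc _ Hf) Hvf Hu vu.
  move: Hf; rewrite Ez => Hf.
  case: (face_cycle Hc Ho Hf) => [[h1 [h2 h3]]|[h1 [h2 h3]]].
    by exists u, z.
  by exists z, u.
move=> i j.
have Hij : connect (tarc faces tau) i j.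
  apply: (connect_sub _ (Hconn i j)) => x y.
  rewrite /adj => /andP[xy /existsP[f /andP[Hf /andP[Hx Hy]]]].
  have [z Ez] := face_split (Hc _ Hf) Hx Hy xy.
  move: Hf; rewrite Ez => Hf.
  case: (face_cycle Hc Ho Hf) => [[h1 [h2 h3]]|[h1 [h2 h3]]].
    exact: connect1.
  exact: connect_trans (connect1 h1) (connect1 h2).
case/connectP: Hij => p Hp ->.
exists (size p); exact: pstep_path.
Qed.
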